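(* Let $K$ be a simplicial complex on $[m]$ and let $K_1,\dots,K_m$ be simplicial complexes on pairwise disjoint finite vertex sets, each having at least one vertex (a 0-simplex). Suppose $K$ has a minimal missing face $\omega$ with $|\omega|\ge3$ and there is a vertex $v\in\omega$ such that $K_v$ contains a 1-simplex. Then for no $k\ge0$ is the substitution complex $K(K_1,\dots,K_m)$ equal to the $k$-skeleton of a flag complex.
   Context: A minimal missing face of $K$ is a subset $\omega$ of the vertex set with $\omega\notin K$ but every proper subset of $\omega$ in $K$. A simplicial complex is flag if every set of its vertices pairwise joined by edges is a simplex. The $k$-skeleton of a complex consists of its simplices of dimension at most $k$. The substitution complex $K(K_1,\dots,K_m)$ is $\bigcup_{\sigma\in K}\ast_{i\in\sigma}K_i$, i.e. its simplices are the sets $\bigcup_{i\in\sigma}\tau_i$ with $\sigma\in K$ and $\tau_i\in K_i$. *)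

(* Defs.v *)
From mathcomp Require Import all_boot.
Set Implicit Arguments. Unset Strict Implicit. Unset Printing Implicit Defensive.

Definition is_complex (T : finType) (K : {set {set T}}) : Prop :=
  forall s t : {set T}, s \in K -> t \subset s -> t \in K.

Definition min_missing_face (T : finType) (K : {set {set T}}) (w : {set T}) : Prop :=
  w \notin K /\ forall t : {set T}, t \proper w -> t \in K.

Definition is_flag (T : finType) (K : {set {set T}}) : Prop :=
  forall s : {set T},
    (forall x, x \in s -> [set x] \in K) ->
    (forall x y, x \in s -> y \in s -> x != y -> [set x; y] \in K) ->
    s \in K.

(* k-skeleton: simplices of dimension at most k, i.e. at most k+1 vertices. *)
Definition skeleton (T : finType) (k : nat) (K : {set {set T}}) : {set {set T}} :=
  [set s in K | #|s| <= k.+1].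

Definition subst_complex (m : nat) (W : finType) (K : {set {set 'I_m}})
    (Ks : 'I_m -> {set {set W}}) : {set {set W}} :=
  [set s : {set W} | [exists sigma in K, exists tau : {ffun 'I_m -> {set W}},
      [forall i in sigma, tau i \in Ks i] && (s == \bigcup_(i in sigma) tau i)]].

(* Main.v *)
Require Import Defs.
From mathcomp Require Import all_boot.

Lemma in_subst (m : nat) (W : finType) (K : {set {set 'I_m}})
    (V : 'I_m -> {set W}) (Ks : 'I_m -> {set {set W}}) (sigma : {set 'I_m}) (s : {set W}) :
  (forall i, is_complex (Ks i)) -> sigma \in K ->
  (forall z, z \in s -> exists2 i, i \in sigma & z \in V i) ->
  (forall i, i \in sigma -> exists2 t, t \in Ks i & s :&: V i \subset t) ->
  s \in subst_complex K Ks.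
Proof.
move=> cKs sK cov loc; rewrite inE; apply/existsP; exists sigma; rewrite sK /=.
apply/existsP; exists [ffun i => s :&: V i]; apply/andP; split.
  apply/forallP => i; apply/implyP => isig; rewrite ffunE.
  by case: (loc i isig) => t tK st; exact: cKs _ _ tK st.
apply/eqP/setP => z; apply/idP/bigcupP.
  by move=> zs; case: (cov z zs) => i isig zV; exists i => //; rewrite ffunE inE zs.
by case=> i _; rewrite ffunE inE => /andP[].
Qed.

Theorem lemma7p5 (m : nat) (W : finType) (K : {set {set 'I_m}})
    (V : 'I_m -> {set W}) (Ks : 'I_m -> {set {set W}}) :
  is_complex K ->
  (forall i, is_complex (Ks i)) ->
  (forall i s, s \in Ks i -> s \subset V i) ->
  (forall i j, i != j -> [disjoint V i & V j]) ->
  (forall i, exists x : W, [set x] \in Ks i) ->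
  forall (w : {set 'I_m}), min_missing_face K w -> 3 <= #|w| ->
  forall v, v \in w -> (exists e, e \in Ks v /\ #|e| = 2) ->
  forall (k : nat) (L : {set {set W}}), is_complex L -> is_flag L ->
    subst_complex K Ks <> skeleton k L.
Proof.
move=> cK cKs KsV dV hx w [wK wprop] w3 v vw [e [eK e2]] k L cL fL SL.
have disj : forall i j x, x \in V i -> x \in V j -> i = j.
  move=> i j x xi xj; apply/eqP/negPn/negP => nij.
  by move: (disjointFr (dV i j nij) xi); rewrite xj.
case/cards2P: (introT eqP e2) => a [b [ab ee]].
have aV : a \in V v by apply: (subsetP (KsV _ _ eK)); rewrite ee !inE eqxx.
have bV : b \in V v by apply: (subsetP (KsV _ _ eK)); rewrite ee !inE eqxx orbT.
pose y i := if i == v then a else odflt a [pick x | [set x] \in Ks i].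
have yK : forall i, [set y i] \in Ks i.
  move=> i; rewrite /y; case: eqP => [->|_].
    by apply: (cKs _ _ _ eK); rewrite ee sub1set !inE eqxx.
  case: pickP => [x //|none]; case: (hx i) => x hxi.
  by move: (none x); rewrite hxi.
have yV : forall i, y i \in V i.
  by move=> i; apply: (subsetP (KsV _ _ (yK i))); rewrite inE.
have yinj : injective y by move=> i j eij; apply: (disj i j (y i)) => //; rewrite eij.
have yloc : forall i z j, z = y j -> z \in V i -> z \in [set y i].
  by move=> i z j -> zi; rewrite (disj _ _ _ (yV j) zi) inE.
have [u uw uv] : exists2 u, u \in w & u != v.
  have : 0 < #|w :\ v|.
    by move: w3; rewrite (cardsD1 v w) vw add1n ltnS => h; exact: leq_trans _ h.
  case/card_gt0P => u; rewrite !inE => /andP[uv uw]; by exists u.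
pose A := y @: w.
pose C := b |: (y @: (w :\ u)).
have propS : forall sigma : {set 'I_m}, sigma \subset w -> #|sigma| <= 2 -> sigma \in K.
  move=> sigma sw s2; apply: wprop; rewrite properEcard sw /=.
  by apply: leq_ltn_trans s2 _.
have SsubL : forall s, s \in subst_complex K Ks -> s \in L.
  by move=> s; rewrite SL inE => /andP[].
have AL : A \in L.
  apply: fL.
    move=> x /imsetP [p pw ->]; apply: SsubL.
    apply: (@in_subst _ _ _ V _ ([set p])) => //.
    - by apply: propS; rewrite ?sub1set ?cards1.
    - by move=> z; rewrite inE => /eqP ->; exists p; rewrite ?inE.
    - move=> i; rewrite inE => /eqP ->; exists [set y p] => //.
      by apply/subsetP => z /setIP[].
  move=> x z /imsetP [p pw ->] /imsetP [q qw ->] _; apply: SsubL.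
  apply: (@in_subst _ _ _ V _ ([set p; q])) => //.
  - apply: propS; first by apply/subsetP => r; rewrite !inE => /orP[]/eqP->.
    by rewrite (leq_trans (subset_leq_card (subxx _)) (leq_trans (leq_card_setU _ _) _)) // !cards1.
  - by move=> t; rewrite !inE => /orP[]/eqP ->; [exists p|exists q]; rewrite ?inE ?eqxx ?orbT.
  - move=> i _; exists [set y i] => //.
    apply/subsetP => t; rewrite !inE => /andP[/orP[]/eqP-> ti].
      by move: (yloc i _ p erefl ti); rewrite inE.
    by move: (yloc i _ q erefl ti); rewrite inE.
have AnS : A \notin subst_complex K Ks.
  rewrite inE; apply/negP => /existsP [sigma /andP[sK /existsP [tau /andP[/forallP tK /eqP Aeq]]]].
  apply: (negP wK); apply: (cK _ _ sK); apply/subsetP => j jw.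
  have : y j \in A by apply: imset_f.
  rewrite Aeq => /bigcupP [i isig yt].
  have ti := implyP (tK i) isig.
  by rewrite (disj _ _ _ (yV j) (subsetP (KsV _ _ ti) _ yt)).
have Abig : k.+1 < #|A|.
  rewrite ltnNge; apply/negP => Ak; apply/negP: AnS; apply/negPn.
  by rewrite SL inE AL.
have CS : C \in subst_complex K Ks.
  apply: (@in_subst _ _ _ V _ (w :\ u)) => //.
  - apply: wprop; rewrite properD1 //.
  - move=> z /setU1P[->|/imsetP[j jw ->]].
      by exists v => //; rewrite !inE eq_sym uv vw.
    by exists j.
  - move=> i _; case: (eqVneq i v) => [->|iv].
      exists e => //; apply/subsetP => z /setIP[/setU1P[->|/imsetP[j _ ->]] zv].
        by rewrite ee !inE eqxx orbT.
      by rewrite (disj _ _ _ (yV j) zv) /y eqxx ee !inE eqxx.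
    exists [set y i] => //; apply/subsetP => z /setIP[/setU1P[->|/imsetP[j _ ->]] zi].
      by move: iv; rewrite (disj _ _ _ bV zi) eqxx.
    by move: (yloc i _ j erefl zi); rewrite inE.
have Csmall : #|C| <= k.+1 by move: CS; rewrite SL inE => /andP[].
have CA : #|C| = #|A|.
  rewrite cardsU1 !card_imset // (cardsD1 u w) uw add1n.
  have -> : b \notin y @: (w :\ u) => //.
  apply/imsetP => [[j _ bj]].
  have jv := disj _ _ _ bV (eq_ind_r (fun t => t \in V j) (yV j) bj).
  by move: bj; rewrite -jv /y eqxx => /eqP; rewrite eq_sym (negbTE ab).
by move: Abig; rewrite -CA ltnNge Csmall.
Qed.
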